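(* Let $(S,\mathsf d)$ be a complete separable metric space and $\mathbf p$ a Borel probability measure on it. For $\varepsilon>0$ and $k\in\mathbb{N}_0$ we have $0\le p_{\varepsilon,k}\le1$, $p_{\varepsilon,0}=0$, $p_{\varepsilon,1}=\int_S\mathbf p(B(x,\varepsilon))\,d\mathbf p(x)$, and $\lim_{k\to\infty}p_{\varepsilon,k}=1$. Moreover, $\operatorname{supp}\mathbf p$ is compact if and only if \[\underline{\mathbf p}_\varepsilon:=\inf_{x\in\operatorname{supp}\mathbf p}\mathbf p(B(x,\varepsilon))>0\quad\text{for every }\varepsilon>0,\] and in this case $p_{\varepsilon,k}\ge1-(1-\underline{\mathbf p}_\varepsilon)^k$, so $p_{\varepsilon,k}\to1$ exponentially fast as $k\to\infty$.
   Context: $B(x,\varepsilon):=\{y:\mathsf d(x,y)<\varepsilon\}$. The $(\varepsilon,k)$-subcovering probability is $p_{\varepsilon,k}:=\mathbb P\big(X\in\bigcup_{i=1}^kB(X_i,\varepsilon)\big)$, where $X,X_1,\dots,X_k$ are i.i.d. with law $\mathbf p$ (the union is empty for $k=0$). *)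

(* Defs.v *)
From HB Require Import structures.
From mathcomp Require Import all_boot all_order all_algebra.
From mathcomp Require Import all_classical all_reals all_analysis.
Set Implicit Arguments. Unset Strict Implicit. Unset Printing Implicit Defensive.
Import Order.TTheory GRing.Theory Num.Theory.
Local Open Scope classical_set_scope.
Local Open Scope ring_scope.

(* Metric spaces with a distinguished point (needed by [g_sigma_algebraType];
   harmless: a space carrying a probability measure is nonempty). *)
#[short(type="pointedMetricType")]
HB.structure Definition PointedMetric (K : numDomainType) :=
  { M of Metric K M & isPointed M }.

Definition complete_space {R : realType} (S : pointedMetricType R) : Prop :=
  forall F : set_system S, ProperFilter F -> cauchy F -> exists x : S, F --> x.

Definition separable_space {R : realType} (S : pointedMetricType R) : Prop :=
  exists2 D : set S, countable D & dense D.

Notation Borel S := (g_sigma_algebraType (@open S)).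

Definition supp {R : realType} {S : pointedMetricType R}
  (P : probability (Borel S) R) : set S :=
  [set x | forall U : set S, open U -> U x -> (0 < P U)%E].

(* The (k)-fold product measure P^{\otimes k}, on lists of length k,
   defined by iterated integration (as mathcomp's [m1 \x m2]):
   P^{0}(A) = 1_A([::]),  P^{k+1}(A) = \int P^{k}({s | x :: s \in A}) dP(x). *)
Fixpoint prodP {R : realType} {S : pointedMetricType R}
  (P : probability (Borel S) R) (k : nat) (A : set (seq S)) : \bar R :=
  match k with
  | 0 => ((\1_A [::] : R)%:E)
  | k'.+1 => (\int[P]_(x in setT) prodP P k' [set s | A ((x : S) :: s)])%E
  end.

(* The event {X \in \bigcup_{i=1}^k B(X_i, eps)} for (X, X_1, ..., X_k)
   encoded as the list [:: X; X_1; ...; X_k]. *)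
Definition subcover_event {R : realType} {S : pointedMetricType R} (eps : R)
  : set (seq S) :=
  [set s | match s with
           | x :: t => exists i, (i < size t)%N /\ ball (nth x t i) eps x
           | [::] => False
           end].

(* (eps,k)-subcovering probability p_{eps,k} = P(X \in \bigcup_{i<=k} B(X_i,eps))
   with X, X_1, ..., X_k i.i.d. of law P. *)
Definition subcov_prob {R : realType} {S : pointedMetricType R}
  (P : probability (Borel S) R) (eps : R) (k : nat) : \bar R :=
  prodP P k.+1 (subcover_event eps).

Definition min_ball_mass {R : realType} {S : pointedMetricType R}
  (P : probability (Borel S) R) (eps : R) : \bar R :=
  ereal_inf [set P (ball x eps) | x in supp P].

(* Main.v *)
Require Import Defs.
From HB Require Import structures.
From mathcomp Require Import all_boot all_order all_algebra.
From mathcomp Require Import all_classical all_reals all_analysis.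
From mathcomp Require Import lra ring.
Import Order.TTheory GRing.Theory Num.Theory.
Local Open Scope classical_set_scope.
Local Open Scope ring_scope.
Import measurable_realfun.
Lemma openI_sub (T : topologicalType) (A : set T) : A `<=` A° -> open A.
Proof. by rewrite openE. Qed.

Section S1.
Context {R : realType} {S : pointedMetricType R} (P : probability (Borel S) R).

Lemma open_meas (U : set S) : open U -> measurable (U : set (Borel S)).
Proof. move=> oU; exact: sub_sigma_algebra. Qed.

Lemma ballS_open (x : S) e : open (ball x e).
Proof.
rewrite openE => y; rewrite ballEmdist /= => hxy.
apply/nbhs_ballP; exists (e - mdist x y) => /=; first by rewrite subr_gt0.
move=> z; rewrite !ballEmdist /= => hyz.
have := metric_triangle x y z; lra.
Qed.

Lemma Pge0 (A : set (Borel S)) : (0 <= P A)%E.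
Proof. exact: measure_ge0. Qed.

Lemma Ple1 {A : set (Borel S)} : measurable A -> (P A <= 1)%E.
Proof. move=> mA; exact: probability_le1. Qed.

Lemma Pfin (A : set (Borel S)) : measurable A -> P A = (fine (P A))%:E.
Proof.
move=> mA; rewrite fineK // ge0_fin_numE ?Pge0 //. by rewrite (le_lt_trans (Ple1 mA)) // ltry.
Qed.

Lemma mfun_of_open (f : S -> R) : (forall t, open [set x | t < f x]) ->
  measurable_fun (setT : set (Borel S)) f.
Proof.
move=> H; apply: (measurability _ (measurable_realfun.RGenOInfty.measurableE R)).
move=> /= _ [_ [a ->]] <-; apply: measurableI => //; apply: open_meas.
rewrite (_ : _ @^-1` _ = [set x | a < f x]); first exact: H.
by apply/seteqP; split => x /=; rewrite in_itv /= andbT.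
Qed.
Lemma ballsym_eq (x : S) e : [set y | ball y e x] = ball x e.
Proof. by apply/seteqP; split => y /= h; apply: ball_sym. Qed.

Lemma ball_meas (x : S) e : measurable (ball x e : set (Borel S)).
Proof. apply: open_meas; exact: ballS_open. Qed.

Lemma fineP_ge0 (A : set (Borel S)) : 0 <= fine (P A).
Proof. by apply: fine_ge0; apply: Pge0. Qed.

Lemma fineP_le1 (A : set (Borel S)) : measurable A -> fine (P A) <= 1.
Proof. by move=> mA; rewrite -lee_fin -Pfin // Ple1. Qed.

Lemma prodP_setT k : prodP P k setT = 1%E.
Proof.
elim: k => [|k IH] /=; first by rewrite indicE mem_set.
transitivity (\int[P]_(x in setT) cst 1%E x)%E.
  by apply: eq_integral => x _; exact: IH.
rewrite integral_cst // mul1e; exact: probability_setT.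
Qed.

Definition Ax (eps : R) (x : S) : set (seq S) :=
  [set s | exists i, (i < size s)%N /\ ball (nth x s i) eps x].

Lemma prodP_Ax eps k x :
  prodP P k (Ax eps x) = (1 - (1 - fine (P (ball x eps)))^+k)%:E.
Proof.
elim: k => [|k IH] /=.
  by rewrite indicE memNset ?expr0 ?subrr //= => -[i []].
set b := fine (P (ball x eps)); set q := 1 - (1 - b)^+k.
have b1 : b <= 1 by apply: fineP_le1; exact: ball_meas.
have b0 : 0 <= b by apply: fineP_ge0.
have q1 : 0 <= 1 - q by rewrite /q opprB addrC subrK; apply: exprn_ge0; lra.
have q0 : 0 <= q.
  rewrite /q subr_ge0; apply: exprn_ile1; lra.
transitivity (\int[P]_(y in setT) ((1 - q)%:E * (\1_(ball x eps) y)%:E + q%:E))%E.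
  apply: eq_integral => y _; case: (pselect (ball x eps y)) => hy.
    rewrite (_ : [set s | Ax eps x (y :: s)] = setT).
      by rewrite prodP_setT indicE mem_set // -EFinM -EFinD mulr1 subrK.
    apply/seteqP; split => s //= _; exists 0%N; split => //=; exact: ball_sym.
  rewrite (_ : [set s | Ax eps x (y :: s)] = Ax eps x).
    by rewrite IH indicE memNset // mule0 add0e.
  apply/seteqP; split => s /= [i [hi hb]].
    case: i hi hb => [|i] hi hb /=; first by exfalso; apply: hy; exact: ball_sym.
    by exists i.
  by exists i.+1.
rewrite ge0_integralD //; last 2 first.
- by move=> y _; apply: mule_ge0; rewrite lee_fin // indicE; case: (_ \in _).
- have -> : (fun y : Borel S => ((1 - q)%:E * (\1_(ball x eps) y)%:E)%E) =
      EFin \o (fun y => (1 - q) * \1_(ball x eps) y) by apply/funext => y; rewrite /= EFinM.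
  apply/measurable_EFinP; apply: measurable_funM => //; exact: measurable_indic (ball_meas x eps).
rewrite ge0_integralZl_EFin //.
rewrite integral_indic // ?setIT ?integral_cst //. - transitivity ((1-q)%:E * b%:E + q%:E * 1%:E)%E.
    congr (_ * _ + _ * _)%E; [exact: Pfin (ball_meas x eps) | exact: probability_setT].
  rewrite -!EFinM -EFinD /q exprS; congr EFin; ring.
- exact: ball_meas.
- apply/measurable_EFinP; exact: measurable_indic (ball_meas x eps).
Qed.

Lemma subcovE eps k : subcov_prob P eps k =
  (\int[P]_(x in setT) (1 - (1 - fine (P (ball (x : S) eps)))^+k)%:E)%E.
Proof. by apply: eq_integral => x _; exact: prodP_Ax. Qed.

Lemma ball_sub (x y : S) r e : ball x (e - r) y -> ball x r `<=` ball y e.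
Proof.
rewrite !ballEmdist /= => hxy z /= hxz.
have := metric_triangle y x z; rewrite (metric_sym y x); lra.
Qed.

Lemma ballU (x : S) eps : 0 < eps ->
  \bigcup_n ball x (eps - eps / n.+1%:R) = ball x eps.
Proof.
move=> e0; apply/seteqP; split => y.
  move=> [n _]; apply: le_ball; rewrite lerBlDr lerDl; exact: divr_ge0 (ltW e0) (ler0n _ _).
rewrite ballEmdist /= => hy.
set c := eps / (eps - mdist x y).
exists (Num.Def.trunc c) => //; rewrite ballEmdist /=.
have hc : c < (Num.Def.trunc c).+1%:R by exact: truncnS_gt.
have d0 : 0 < eps - mdist x y by rewrite subr_gt0.
have : eps / (Num.Def.trunc c).+1%:R < eps - mdist x y.
  rewrite ltr_pdivrMr //; move: hc; rewrite /c ltr_pdivrMr // => hc.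
  by rewrite mulrC.
move: (eps / _) => u h; lra.
Qed.

Lemma ball_lsc (x : S) eps t : 0 < eps -> (t%:E < P (ball x eps))%E ->
  exists2 r, r < eps & (t%:E < P (ball x r))%E.
Proof.
move=> e0 ht; case: (pselect (exists2 r, r < eps & (t%:E < P (ball x r))%E)) => // H; exfalso.
have H' : forall n, (P (ball x (eps - eps / n.+1%:R)) <= t%:E)%E.
  move=> n; rewrite leNgt; apply/negP => hn; apply: H; exists (eps - eps / n.+1%:R) => //.
  by rewrite ltrBlDr ltrDl; apply: divr_gt0.
have cv := @nondecreasing_cvg_mu _ _ _ P (fun n => ball x (eps - eps / n.+1%:R))
  (fun n => ball_meas x _).
rewrite ballU // in cv.
have {}cv := cv (ball_meas x eps).
have {}cv : (P \o (fun n => ball x (eps - eps / n.+1%:R))) x0 @[x0 --> \oo] --> P (ball x eps).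
  apply: cv => n m nm; apply/subsetPset; apply: le_ball.
  rewrite lerD2l lerN2 ler_pM2l // lef_pV2 ?ler_nat ?posrE ?ltr0Sn //.
have nH : \forall n \near \oo, ((P \o (fun n => ball x (eps - eps / n.+1%:R))) n <= t%:E)%E.
  by apply: nearW => n; exact: H'.
have := @lime_le _ _ _ R (t%:E) _ (cvgP _ cv) nH.
move=> /(_ _); rewrite (cvg_lim _ cv) //.
by move=> h; move: ht; rewrite ltNge h.
Qed.

Lemma bf_open eps t : 0 < eps -> open [set x : S | t < fine (P (ball x eps))].
Proof.
move=> e0; apply: openI_sub => x /= hx.
have : (t%:E < P (ball x eps))%E by rewrite Pfin ?lte_fin //; exact: ball_meas.
move=> /(@ball_lsc x eps t e0) [r reps hr].
apply/nbhs_ballP; exists (eps - r) => /=; first by rewrite subr_gt0.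
move=> y hy /=.
have sub := @ball_sub x y r eps hy.
have : (P (ball x r) <= P (ball y eps))%E.
  by apply: le_measure => //; rewrite inE; exact: ball_meas.
move=> h; have := lt_le_trans hr h.
by rewrite Pfin ?lte_fin //; exact: ball_meas.
Qed.

Lemma bf_meas eps : 0 < eps ->
  measurable_fun (setT : set (Borel S)) (fun x : S => fine (P (ball x eps))).
Proof. by move=> e0; apply: mfun_of_open => t; exact: bf_open. Qed.

Lemma supp_ball x eps : supp P x -> 0 < eps -> 0 < fine (P (ball x eps)).
Proof.
move=> sx e0; have := sx _ (ballS_open x eps) (ballxx x e0).
by rewrite Pfin ?lte_fin //; exact: ball_meas.
Qed.

Lemma suppC_open : open (~` supp P).
Proof.
apply: openI_sub => x /= hx.
have [U [oU Ux PU]] : exists U, [/\ open U, U x & ~ (0 < P U)%E].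
  apply: contrapT => H; apply: hx => U oU Ux.
  by apply: contrapT => h; apply: H; exists U.
rewrite /interior; apply: (@filterS _ _ _ U).
  move=> y Uy sy; apply: PU; exact: sy _ oU Uy.
by apply: open_nbhs_nbhs; split.
Qed.

Lemma supp_meas : measurable (supp P : set (Borel S)).
Proof.
rewrite -(setCK (supp P)); apply: measurableC; apply: open_meas; exact: suppC_open.
Qed.

Lemma notsupp x : ~ supp P x -> exists U, [/\ open U, U x & P U = 0%E].
Proof.
move=> hx.
have [U [oU Ux PU]] : exists U, [/\ open U, U x & ~ (0 < P U)%E].
  apply: contrapT => H; apply: hx => U oU Ux.
  by apply: contrapT => h; apply: H; exists U.
exists U; split => //; apply/eqP; rewrite eq_le measure_ge0 andbT.
by rewrite leNgt; apply/negP.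
Qed.

Lemma P_suppC : separable_space S -> P (~` supp P) = 0%E.
Proof.
case=> D cD dD.
have [g ginj] : exists g : S -> nat, {in D &, injective g} by apply/countable_injP.
pose f : nat -> S := fun n => match pselect (exists d, D d /\ g d = n) with
  | left h => proj1_sig (cid h) | right _ => point end.
have fD : forall d, D d -> f (g d) = d.
  move=> d Dd; rewrite /f; case: pselect => [h|]; last first.
    by move=> H; exfalso; apply: H; exists d.
  case: (cid h) => d' /= [Dd' gd']; apply: ginj => //; exact: mem_set.
pose G : nat -> nat -> set (Borel S) := fun n k =>
  if pselect (P (ball (f n) (k.+1%:R^-1)) = 0%E) is left _
  then ball (f n) (k.+1%:R^-1) else set0.
have negG : forall n k, P.-negligible (G n k).
  move=> n k; rewrite /G; case: pselect => h.
    by exists (ball (f n) (k.+1%:R^-1)); split => //; exact: ball_meas.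
  by exists set0; split => //; exact: measure0.
have : P.-negligible (\bigcup_n \bigcup_k G n k).
  by apply: negligible_bigcup => n; apply: negligible_bigcup => k; exact: negG.
move=> /negligibleS H; apply/negligibleP; first by apply: measurableC; exact: supp_meas.
apply: H => x /= /notsupp [U [oU Ux PU]].
have : nbhs x U by apply: open_nbhs_nbhs; split.
move=> /nbhs_ballP [r /= r0 rU].
set k := Num.Def.trunc (2 / r).
set dl : R := k.+1%:R^-1.
have dl0 : 0 < dl by rewrite /dl invr_gt0.
have d2 : dl + dl < r.
  have hc : 2 / r < k.+1%:R by exact: truncnS_gt.
  move: hc; rewrite ltr_pdivrMr // => hc.
  have : 2 * dl < r.
    by rewrite /dl ltr_pdivrMr ?ltr0Sn // mulrC.
  lra.
have [d [bd Dd]] : (ball x dl `&` D) !=set0.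
  by apply: dD; [exists x; exact: ballxx | exact: ballS_open].
exists (g d) => //; exists k => //; rewrite /G fD //.
case: pselect => h; first exact: ball_sym.
exfalso; apply: h; apply/eqP; rewrite eq_le measure_ge0 andbT -PU.
apply: le_measure; rewrite ?inE; [exact: ball_meas|exact: open_meas|].
move=> y hy; apply: rU; apply: (@le_ball _ _ _ (dl + dl)); first exact: ltW.
exact: ball_triangle bd hy.
Qed.

Lemma P_supp : separable_space S -> P (supp P) = 1%E.
Proof.
move=> sep; have := probability_setC P (measurableC supp_meas).
rewrite setCK => ->.
transitivity (1 - 0 : \bar R)%E; last by rewrite sube0.
congr (_ - _)%E; exact: P_suppC.
Qed.

Lemma int_supp (f : S -> \bar R) : separable_space S ->
  measurable_fun (setT : set (Borel S)) f ->
  (\int[P]_(x in setT) f x = \int[P]_(x in supp P) f x)%E.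
Proof.
move=> sep mf; rewrite -(setUv (supp P)) integral_setU //.
- rewrite (@null_set_integral _ _ _ P (~` supp P)) ?adde0 //.
  + by apply: measurableC; exact: supp_meas.
  + apply: measurable_funS mf => //.
  + exact: P_suppC.
- exact: supp_meas.
- by apply: measurableC; exact: supp_meas.
- by rewrite setUv.
- by apply/disj_setPCl.
Qed.

Definition fk (eps : R) (k : nat) (x : S) : \bar R :=
  (1 - (1 - fine (P (ball x eps)))^+k)%:E.

Lemma fk_meas eps k : 0 < eps -> measurable_fun (setT : set (Borel S)) (fk eps k).
Proof.
move=> e0; apply/measurable_EFinP; apply: measurable_funB => //.
apply: measurable_funX; apply: measurable_funB => //; exact: bf_meas.
Qed.

Lemma fk_ge0 eps k x : (0 <= fk eps k x)%E.
Proof.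
rewrite /fk lee_fin subr_ge0; apply: exprn_ile1.
  by rewrite subr_ge0; apply: fineP_le1; exact: ball_meas.
by rewrite lerBlDr lerDl; exact: fineP_ge0.
Qed.

Lemma fk_le1 eps k x : (fk eps k x <= 1)%E.
Proof.
rewrite /fk lee_fin lerBlDr lerDl; apply: exprn_ge0.
by rewrite subr_ge0; apply: fineP_le1; exact: ball_meas.
Qed.

Lemma part1 eps : separable_space S -> 0 < eps ->
     (forall k : nat, (0 <= subcov_prob P eps k <= 1)%E)
     /\ subcov_prob P eps 0 = 0%E
     /\ subcov_prob P eps 1 = (\int[P]_(x in setT) P (ball (x : S) eps))%E
     /\ (fun k => subcov_prob P eps k) @ \oo --> 1%E.
Proof.
move=> sep e0; split; [|split; [|split]].
- move=> k; apply/andP; split.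
    by rewrite subcovE; apply: integral_ge0 => x _; exact: fk_ge0.
  rewrite subcovE; apply: (@le_trans _ _ (\int[P]_(x in setT) cst 1%E x)%E).
    apply: ge0_le_integral => //; [move=> x _; exact: fk_ge0 | exact: fk_meas|].
    move=> x _; exact: fk_le1.
  rewrite integral_cst // mul1e; exact: Ple1.
- rewrite subcovE (eq_integral (cst 0%E)) ?integral0 // => x _.
  by rewrite expr0 subrr.
- rewrite subcovE; apply: eq_integral => x _.
  have -> : 1 - (1 - fine (P (ball x eps))) ^+ 1 = fine (P (ball x eps)) by rewrite expr1; ring.
  by rewrite -Pfin //; exact: ball_meas.
- have E : (fun k => subcov_prob P eps k) = fun k => (\int[P]_(x in supp P) fk eps k x)%E.
    by apply/funext => k; rewrite subcovE int_supp //; exact: fk_meas.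
  rewrite E.
  have cv := @cvg_monotone_convergence _ _ _ P (supp P) supp_meas (fun n => fk eps n)
    (fun n => measurable_funS _ (@subsetT _ _) (@fk_meas eps n e0))
    (fun n x _ => fk_ge0 eps n x).
  move: cv => /(_ measurableT) cv.
  have hom : forall x : Borel S, supp P x -> {homo (fk eps)^~ x : n m / (n <= m)%N >-> (n <= m)%E}.
    move=> x sx n m nm; rewrite /fk lee_fin lerD2l lerN2; apply: ler_wiXn2l => //.
      by rewrite subr_ge0; apply: fineP_le1; exact: ball_meas.
    by rewrite lerBlDr lerDl; exact: fineP_ge0.
  have {cv} := cv hom.
  have -> : (\int[P]_(x in supp P) limn ((fk eps)^~ x))%E = 1%E.
    transitivity (\int[P]_(x in supp P) cst 1%E x)%E.
      apply: eq_integral => x; rewrite inE => sx.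
      apply: cvg_lim => //.
      have b0 := @supp_ball x eps sx e0.
      have b1 : fine (P (ball x eps)) <= 1 by apply: fineP_le1; exact: ball_meas.
      rewrite /fk; apply: cvg_EFin; first by apply: nearW.
      rewrite (_ : fine \o _ = fun n => 1 - (1 - fine (P (ball x eps)))^+n) //.
      rewrite -[X in _ --> X](subr0 1).
      apply: cvgB; first exact: cvg_cst.
      by apply: cvg_expr; rewrite ger0_norm; lra.
    by rewrite integral_cst ?mul1e; [exact: P_supp | exact: supp_meas].
  by [].
Qed.

Lemma supp_nonempty : separable_space S -> exists x, supp P x.
Proof.
move=> sep; apply: contrapT => H.
have : supp P = set0.
  by apply/seteqP; split => x // sx; apply: H; exists x.
move=> h; have := P_supp sep; rewrite h measure0 => h1.
have : (0 < 1 :> \bar R)%E by rewrite lte_fin.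
by rewrite -h1 ltxx.
Qed.

Lemma part3 eps k : separable_space S -> 0 < eps ->
  ((1 - (1 - fine (min_ball_mass P eps)) ^+ k)%:E <= subcov_prob P eps k)%E.
Proof.
move=> sep e0.
set M := min_ball_mass P eps.
have M0 : (0 <= M)%E by apply/ereal_infP => y [x _ <-]; exact: measure_ge0.
have hx : forall x, supp P x -> (M <= P (ball x eps))%E.
  by move=> x sx; apply: ge_ereal_inf; exists (P (ball x eps)) => //; exists x.
have [x0 sx0] := supp_nonempty sep.
have Mfin : M \is a fin_num.
  rewrite ge0_fin_numE //; apply: (le_lt_trans (hx x0 sx0)).
  by rewrite (le_lt_trans (Ple1 (ball_meas x0 eps))) // ltry.
set m := fine M.
have m0 : 0 <= m by exact: fine_ge0.
have mb : forall x, supp P x -> m <= fine (P (ball x eps)).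
  move=> x sx; apply: fine_le => //; last exact: hx.
  by rewrite Pfin //; exact: ball_meas.
have m1 : m <= 1 by apply: le_trans (mb x0 sx0) _; apply: fineP_le1; exact: ball_meas.
rewrite subcovE int_supp //; last exact: fk_meas.
have c0 : 0 <= 1 - (1 - m) ^+ k by rewrite subr_ge0; apply: exprn_ile1; lra.
have -> : ((1 - (1 - m) ^+ k)%:E = \int[P]_(x in supp P) cst (1 - (1 - m) ^+ k)%:E x)%E.
  rewrite integral_cst; last exact: supp_meas.
  transitivity ((1 - (1 - m) ^+ k)%:E * 1)%E; first by rewrite mule1.
  by congr (_ * _)%E; symmetry; exact: P_supp.
apply: ge0_le_integral => //.
- exact: supp_meas.
- by apply: measurable_funS (@fk_meas eps k e0) => //.
- move=> x sx; rewrite /fk lee_fin lerD2l lerN2; apply: lerXn2r.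
  + rewrite nnegrE subr_ge0; apply: fineP_le1; exact: ball_meas.
  + by rewrite nnegrE; lra.
  + have := mb x sx; lra.
Qed.

Lemma cpt_pos : compact (supp P) -> forall eps, 0 < eps -> (0 < min_ball_mass P eps)%E.
Proof.
move=> cpt eps e0.
have e2 : 0 < eps / 2 by apply: divr_gt0.
rewrite compact_cover in cpt.
have [D' D'sub cov] := cpt S (supp P) (fun c => ball c (eps / 2)) (fun c _ => ballS_open c _)
  (fun x sx => ex_intro2 (supp P) (fun c => ball c (eps / 2) x) x sx (ballxx x e2)).
set dl := (\big[Order.min/1%E]_(c <- finmap.enum_fset D' | c \in supp P) P (ball c (eps / 2)))%E.
have dl0 : (0 < dl)%E.
  apply: lt_bigmin => [|c cD]; first by rewrite lte_fin.
  move: cD; rewrite inE => sc.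
  exact: sc _ (ballS_open c _) (ballxx c e2).
apply: (lt_le_trans dl0); apply/ereal_infP => _ [x sx <-].
have [c /= cD bcx] := cov x sx.
apply: (@le_trans _ _ (P (ball c (eps / 2)))).
  apply: ge_bigmin_seq; first exact: cD.
  by have := D'sub c cD; rewrite !inE.
apply: le_measure; rewrite ?inE; [exact: ball_meas|exact: ball_meas|].
move=> y hy; apply: (@le_ball _ _ _ (eps / 2 + eps / 2)); first lra.
exact: ball_triangle (ball_sym bcx) hy.
Qed.

Definition Ub (r : R) (L : seq S) : set S := [set y | exists2 c, c \in L & ball c r y].

Lemma Ub_nil r : Ub r [::] = set0.
Proof. by apply/seteqP; split => y // [c]. Qed.

Lemma Ub_cons r x L : Ub r (x :: L) = ball x r `|` Ub r L.
Proof.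
apply/seteqP; split => y.
  move=> [c]; rewrite in_cons => /orP [/eqP ->|cL] h; [by left|by right; exists c].
by move=> [h|[c cL h]]; [exists x => //; rewrite in_cons eqxx | exists c => //; rewrite in_cons cL orbT].
Qed.

Lemma Ub_meas r L : measurable (Ub r L : set (Borel S)).
Proof.
elim: L => [|x L IH]; first by rewrite Ub_nil.
rewrite Ub_cons; apply: measurableU => //; exact: ball_meas.
Qed.

Lemma totbdd e : 0 < e -> (forall eps, 0 < eps -> (0 < min_ball_mass P eps)%E) ->
  exists L, supp P `<=` Ub e L.
Proof.
move=> e0 Hpos; apply: contrapT => H.
have H' : forall L, exists x, supp P x /\ ~ Ub e L x.
  move=> L; apply: contrapT => H2; apply: H; exists L => x sx.
  by apply: contrapT => h; apply: H2; exists x.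
have e2 : 0 < e / 2 by apply: divr_gt0.
set mu := min_ball_mass P (e / 2).
have mu0 := Hpos _ e2.
have [x0 [sx0 _]] := H' [::].
have hx : forall x, supp P x -> (mu <= P (ball x (e / 2)))%E.
  by move=> x sx; apply: ge_ereal_inf; exists (P (ball x (e / 2))) => //; exists x.
have mufin : mu \is a fin_num.
  rewrite ge0_fin_numE ?(ltW mu0) //; apply: (le_lt_trans (hx x0 sx0)).
  by rewrite (le_lt_trans (Ple1 (ball_meas x0 _))) // ltry.
set m := fine mu.
have m0 : 0 < m by rewrite -lte_fin /m fineK.
have hxm : forall x, supp P x -> (m%:E <= P (ball x (e / 2)))%E.
  by move=> x sx; rewrite /m fineK //; exact: hx.
have claim : forall n : nat, exists L, ((n%:R * m)%:E <= P (Ub (e / 2) L))%E.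
  elim=> [|n [L hL]]; first by exists [::]; rewrite mul0r measure_ge0.
  have [x [sx nx]] := H' L.
  exists (x :: L); rewrite Ub_cons measureU //; first last.
  - apply/seteqP; split => // y [hy [c cL hc]]; apply: nx; exists c => //.
    apply: (@le_ball _ _ _ (e / 2 + e / 2)); first lra.
    exact: ball_triangle hc (ball_sym hy).
  - exact: Ub_meas.
  - exact: ball_meas.
  rewrite -natr1 mulrDl mul1r EFinD addeC.
  by apply: leeD => //; exact: hxm.
have [L hL] := claim (Num.Def.trunc (m^-1)).+1.
have : ((Num.Def.trunc (m^-1)).+1%:R * m <= 1)%R.
  rewrite -lee_fin; apply: (le_trans hL); exact: Ple1 (Ub_meas _ _).
have := truncnS_gt (m^-1).
rewrite -(ltr_pM2r m0) mulVf ?gt_eqF //.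
move=> h1 h2; have := lt_le_trans h1 h2; by rewrite ltxx.
Qed.

Lemma ultra_Ub (F : set_system S) r L : UltraFilter F -> F (Ub r L) ->
  exists c, F (ball c r).
Proof.
move=> uF; have PF : ProperFilter F := @ultra_proper _ F uF.
elim: L => [|x L IH]; first by rewrite Ub_nil => /filter_not_empty.
rewrite Ub_cons => FU.
case: (in_ultra_setVsetC (ball x r) uF) => hb; first by exists x.
apply: IH; apply: (filterS _ (filterI FU hb)).
by move=> y [[h|h] h']; [exfalso; exact: h' h|].
Qed.

Lemma pos_cpt : complete_space S ->
  (forall eps, 0 < eps -> (0 < min_ball_mass P eps)%E) -> compact (supp P).
Proof.
move=> cS Hpos; rewrite compact_ultra => F uF Fs.
have PF : ProperFilter F := @ultra_proper _ F uF.
have cF : cauchy F.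
  apply: cauchy_exP => e e0.
  have [L hL] := @totbdd e e0 Hpos.
  exact: ultra_Ub (filterS hL Fs).
have [x Fx] := cS F PF cF.
exists x; split => //.
move=> U oU Ux.
have FU : F U by apply: Fx; apply: open_nbhs_nbhs; split.
have [y [Uy sy]] := filter_ex (filterI FU Fs).
exact: sy _ oU Uy.
Qed.
End S1.

Theorem lemma3p8 (R : realType) (S : pointedMetricType R)
  (S_complete : complete_space S) (S_separable : separable_space S)
  (P : probability (Borel S) R) :
  (forall (eps : R), 0 < eps ->
     (forall k : nat, (0 <= subcov_prob P eps k <= 1)%E)
     /\ subcov_prob P eps 0 = 0%E
     /\ subcov_prob P eps 1 = (\int[P]_(x in setT) P (ball (x : S) eps))%E
     /\ (fun k => subcov_prob P eps k) @ \oo --> 1%E)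
  /\ (compact (supp P) <-> forall eps : R, 0 < eps -> (0 < min_ball_mass P eps)%E)
  /\ (compact (supp P) ->
      forall (eps : R), 0 < eps -> forall k : nat,
        ((1 - (1 - fine (min_ball_mass P eps)) ^+ k)%:E <= subcov_prob P eps k)%E).
Proof.
split; [|split].
- by move=> eps e0; apply: part1.
- split; [exact: cpt_pos | exact: pos_cpt].
- by move=> _ eps e0 k; apply: part3.
Qed.
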